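(* Let $X$ be a binary $N\times t$ matrix that is 3-good, let $S\subseteq[t]$ with $|S|=3$, $\mathbf{y}=r(X,S)$, $H=H(X,3,\mathbf{y})=([t],E)$, $L_1=\log_2\log_2 t$, $L_2=3L_1$. Let $G'=([t],E')$ be the graph in which distinct vertices $v_1,v_2$ are adjacent iff at least $L_2$ hyperedges of $E$ contain both. Let $E_1\subseteq E$ be the set of hyperedges containing some edge of $G'$ as a subset, $E_2=E\setminus E_1$, and $H_2=([t],E_2)$. Then: (1) every vertex of $H_2$ is contained in at most $2L_1L_2$ hyperedges of $E_2$; (2) $|E_2|$ is less than $6L_1L_2$ times the size of the largest $(3,0)$ configuration in $H_2$.
   Context: For a binary $N\times t$ matrix $X$ with columns $x(1),\dots,x(t)$ and $S\subseteq[t]$, $r(X,S)=\bigvee_{j\in S}x(j)$ (coordinatewise Boolean OR). For $\mathbf{y}\in\{0,1\}^N$, $H(X,3,\mathbf{y})$ is the $3$-uniform hypergraph on $[t]$ whose hyperedges are all $3$-element $S\subseteq[t]$ with $r(X,S)=\mathbf{y}$. A $(3,k)$ configuration of size $L$ is a set of $L$ hyperedges $e_1,\dots,e_L$ with a set $U$, $|U|=k$, such that $e_i\cap e_j=U$ for all $i\ne j$. Fix $p\in(0,1)$; $\Pr_1(s,w)$ is the probability that the OR of $s$ independent uniformly random length-$N$ binary columns of weight $\lfloor pN\rfloor$ equals a fixed vector of weight $w$; $\Pr_2(s,w_1,w)$ is the probability that the OR of $s$ such columns together with a fixed column $\mathbf{y}_1$ of weight $w_1$ equals a fixed vector $\mathbf{y}$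 of weight $w$ with $\mathbf{y}\vee\mathbf{y}_1=\mathbf{y}$. With $L_1=\log_2\log_2 t$, $X$ is 3-good if: (1) for every $\mathbf{y}$, $H(X,3,\mathbf{y})$ has no $(3,1)$ configuration of size $L_1$; (2) for every $\mathbf{y}$ with $|\mathbf{y}|=w$, $H(X,3,\mathbf{y})$ has no $(3,0)$ configuration of size $10\max(t^3\Pr_1(3,w),N)$; (3) for all $\mathbf{y},\mathbf{y}_1$ with $\mathbf{y}\vee\mathbf{y}_1=\mathbf{y}$, $|\mathbf{y}_1|=w_1$, $|\mathbf{y}|=w$, the number of $j$ with $\mathbf{y}_1\vee x(j)=\mathbf{y}$ is less than $10B(N,t)$, where $B(N,t)=t\Pr_2(1,w_1,w)$ if this exceeds $N$, $B(N,t)=N$ if $t^{-1/\sqrt{L_1}}\le t\Pr_2(1,w_1,w)\le N$, and $B(N,t)=L_1/10$ if $t\Pr_2(1,w_1,w)<t^{-1/\sqrt{L_1}}$; (4) for every $\mathbf{y}$ with $|\mathbf{y}|=w$ and integer $w_1\le w$, the number of pairwise disjoint pairs $\{j_1,j_2\}\subseteq[t]$ with $x(j_1)\vee x(j_2)\vee\mathbf{y}=\mathbf{y}$ and $|x(j_1)\vee x(j_2)|=w_1$ is less than $10\max(N,\binom{w}{w_1}t^2\Pr_1(2,w_1))$. *)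

(* Defs.v *)
From Stdlib Require Import Reals.
From mathcomp Require Import all_boot all_algebra.
Set Implicit Arguments.
Unset Strict Implicit.
Unset Printing Implicit Defensive.

Definition bvec (N : nat) := {ffun 'I_N -> bool}.

Definition wt N (v : bvec N) : nat := #|[set i | v i]|.

Definition bor N (u v : bvec N) : bvec N := [ffun i => u i || v i].

Definition column N t (X : 'M[bool]_(N, t)) (j : 'I_t) : bvec N := [ffun i => X i j].

Definition rOR N t (X : 'M[bool]_(N, t)) (S : {set 'I_t}) : bvec N :=
  [ffun i => [exists j in S, X i j]].

Definition Hedges N t (X : 'M[bool]_(N, t)) (y : bvec N) : {set {set 'I_t}} :=
  [set e : {set 'I_t} | (#|e| == 3) && (rOR X e == y)].

(* F is a (3,k) configuration (sunflower with kernel U, |U| = k); its size is #|F| *)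
Definition is_config t (k : nat) (F : {set {set 'I_t}}) : bool :=
  [exists U : {set 'I_t}, (#|U| == k) &&
     [forall e1 in F, forall e2 in F, (e1 != e2) ==> (e1 :&: e2 == U)]].

Definition cvec N (w : nat) : bvec N := [ffun i : 'I_N => (i < w)%N].

(* weight floor(pN) of the random columns *)
Definition colwt (p : R) (N : nat) : nat := Z.to_nat (Int_part (p * INR N)).

Definition borall N s (f : {ffun 'I_s -> bvec N}) : bvec N :=
  [ffun i => [exists k, f k i]].

(* Pr_1(s,w): probability that the OR of s independent uniform columns of weight
   floor(pN) equals a fixed vector of weight w (by symmetry, the canonical one). *)
Definition Pr1 (p : R) (N s w : nat) : R :=
  let k := colwt p N in
  Rdiv (INR #|[set f : {ffun 'I_s -> bvec N} |
            [forall a, wt (f a) == k] && (borall f == cvec N w)]|)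
       (INR #|[set f : {ffun 'I_s -> bvec N} | [forall a, wt (f a) == k]]|).

(* Pr_2(s,w1,w): same, with the OR also including a fixed y1 of weight w1, y1 <= y. *)
Definition Pr2 (p : R) (N s w1 w : nat) : R :=
  let k := colwt p N in
  Rdiv (INR #|[set f : {ffun 'I_s -> bvec N} |
            [forall a, wt (f a) == k] && (bor (cvec N w1) (borall f) == cvec N w)]|)
       (INR #|[set f : {ffun 'I_s -> bvec N} | [forall a, wt (f a) == k]]|).

Definition log2R (x : R) : R := Rdiv (ln x) (ln (INR 2)).
Definition L1 (t : nat) : R := log2R (log2R (INR t)).

(* B(N,t) as a function of x = t * Pr_2(1,w1,w) *)
Definition Bfun (N t : nat) (x : R) : R :=
  if Rlt_dec (INR N) x then x
  else if Rle_dec (Rpower (INR t) (Ropp (Rinv (sqrt (L1 t))))) x then INR N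
  else Rdiv (L1 t) (INR 10).

Definition good3 (p : R) N t (X : 'M[bool]_(N, t)) : Prop :=
  (forall (y : bvec N) (F : {set {set 'I_t}}),
      F \subset Hedges X y -> is_config 1 F -> Rlt (INR #|F|) (L1 t)) /\
  (forall (y : bvec N) (F : {set {set 'I_t}}),
      F \subset Hedges X y -> is_config 0 F ->
      Rlt (INR #|F|) (Rmult (INR 10) (Rmax (Rmult (pow (INR t) 3) (Pr1 p N 3 (wt y))) (INR N)))) /\
  (forall (y y1 : bvec N), bor y y1 = y ->
      Rlt (INR #|[set j : 'I_t | bor y1 (column X j) == y]|)
          (Rmult (INR 10) (Bfun N t (Rmult (INR t) (Pr2 p N 1 (wt y1) (wt y)))))) /\
  (forall (y : bvec N) (w1 : nat) (P : {set {set 'I_t}}), (w1 <= wt y)%N ->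
      (forall q, q \in P -> exists j1 j2 : 'I_t,
          [/\ j1 != j2, q = [set j1; j2],
              bor (bor (column X j1) (column X j2)) y = y &
              wt (bor (column X j1) (column X j2)) = w1]) ->
      (forall q1 q2, q1 \in P -> q2 \in P -> q1 != q2 -> [disjoint q1 & q2]) ->
      Rlt (INR #|P|) (Rmult (INR 10) (Rmax (INR N)
            (Rmult (Rmult (INR 'C(wt y, w1)) (pow (INR t) 2)) (Pr1 p N 2 w1))))).

(* Main.v *)
Require Import Defs.
From Stdlib Require Import Reals Lra.
From mathcomp Require Import all_boot all_algebra.
Lemma card_bigcup_le (I T : finType) (P : pred I) (F : I -> {set T}) :
  #|\bigcup_(i | P i) F i| <= \sum_(i | P i) #|F i|.
Proof.
elim/big_ind2: _ => [|A m B n hA hB|i _] //; first by rewrite cards0.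
apply: leq_trans (leq_card_setU m n).1 _; exact: leq_add.
Qed.

Lemma deg_bound (T : finType) (D : {set {set T}}) (v : T) (m : nat) :
  (forall e, e \in D -> #|e| = 3) ->
  (forall w, w != v -> #|[set e in D | (v \in e) && (w \in e)]| <= m) ->
  exists F : {set {set T}}, [/\ F \subset D, (forall f, f \in F -> v \in f),
    (forall e1 e2, e1 \in F -> e2 \in F -> e1 != e2 -> e1 :&: e2 = [set v]) &
    #|[set e in D | v \in e]| <= 2 * #|F| * m].
Proof.
move=> h3 hm.
pose P := fun F : {set {set T}} => [&& F \subset D, [forall f in F, v \in f] &
   [forall e1 in F, forall e2 in F, (e1 != e2) ==> (e1 :&: e2 == [set v])]].
have P0 : P set0.
  by rewrite /P sub0set /=; apply/andP; split; apply/forall_inP => f; rewrite inE.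
case: (@arg_maxnP _ set0 P (fun F => #|F|) P0) => F0 PF0 maxF0.
case/and3P: PF0 => F0D /forall_inP F0v /forall_inP F0p.
have F0p' : forall e1 e2, e1 \in F0 -> e2 \in F0 -> e1 != e2 -> e1 :&: e2 = [set v].
  move=> e1 e2 h1 h2 ne; move/forall_inP: (F0p e1 h1) => /(_ e2 h2).
  by rewrite ne => /eqP.
exists F0; split => //.
set W := \bigcup_(f in F0) (f :\ v).
have cover : [set e in D | v \in e] \subset
    \bigcup_(w in W) [set e in D | (v \in e) && (w \in e)].
  apply/subsetP => e; rewrite inE => /andP[eD ve].
  suff [w wW we] : exists2 w, w \in W & w \in e.
    by apply/bigcupP; exists w => //; rewrite inE eD ve we.
  case: (boolP (e \in F0)) => eF.
    have : e :\ v != set0.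
      apply/negP => /eqP h0; move: (cardsD1 v e); rewrite h0 cards0 h3 // ve.
      by [].
    case/set0Pn => w wev; exists w; last by move: wev; rewrite inE => /andP[].
    by apply/bigcupP; exists e.
  case: (pickP [pred w | (w \in W) && (w \in e)]) => [w /andP[h1 h2]|none].
    by exists w.
  exfalso.
  have Pe : P (e |: F0).
    apply/and3P; split.
    - by rewrite subUset sub1set eD F0D.
    - apply/forall_inP => f; rewrite in_setU1 => /predU1P[->|] //; exact: F0v.
    - have key : forall f, f \in F0 -> e :&: f = [set v].
        move=> f fF; apply/setP => x; rewrite !inE.
        case: (eqVneq x v) => [->|xv]; first by rewrite ve F0v.
        apply/negbTE/negP => /andP[xe xf].
        move: (none x) => /=; rewrite xe andbT => /negbT/negP; apply.
        by apply/bigcupP; exists f => //; rewrite !inE xv xf.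
      apply/forall_inP => e1 h1; apply/forall_inP => e2 h2; apply/implyP => ne.
      move: h1 h2 ne; rewrite !in_setU1 => /predU1P[->|h1] /predU1P[->|h2] ne.
      + by rewrite eqxx in ne.
      + by rewrite key.
      + by rewrite setIC key.
      + by rewrite F0p'.
  by move: (maxF0 _ Pe); rewrite cardsU1 eF add1n /= ltnn.
apply: leq_trans (subset_leq_card cover) _.
apply: leq_trans (card_bigcup_le _ _ (fun w => w \in W) (fun w => [set e in D | (v \in e) && (w \in e)])) _.
have hW : forall w, w \in W -> w != v.
  by move=> w /bigcupP[f _]; rewrite !inE => /andP[].
apply: (@leq_trans (\sum_(w in W) m)); first by apply: leq_sum => w hw; apply: hm; apply: hW.
rewrite sum_nat_const; apply: leq_mul => //.
apply: leq_trans (card_bigcup_le _ _ (fun f => f \in F0) (fun f => f :\ v)) _.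
rewrite mulnC -sum_nat_const; apply: leq_sum => f fF.
by move: (cardsD1 v f); rewrite F0v // h3 ?(subsetP F0D) // add1n => [[<-]].
Qed.

Lemma config0P (t : nat) (F : {set {set 'I_t}}) :
  is_config 0 F = [forall e1 in F, forall e2 in F, (e1 != e2) ==> (e1 :&: e2 == set0)].
Proof.
apply/idP/idP.
  case/existsP => U /andP[/eqP/cards0_eq -> h] //.
move=> h; apply/existsP; exists set0; by rewrite cards0 eqxx h.
Qed.

Lemma E2_bound (t : nat) (D : {set {set 'I_t}}) (M : nat) :
  (forall e, e \in D -> #|e| = 3) ->
  (forall u, #|[set e in D | u \in e]| <= M) ->
  #|D| <= 3 * M * \max_(F : {set {set 'I_t}} | (F \subset D) && is_config 0 F) #|F|.
Proof.
move=> h3 hM.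
pose P := fun F : {set {set 'I_t}} => (F \subset D) && is_config 0 F.
have P0 : P set0.
  by rewrite /P sub0set config0P; apply/forall_inP => f; rewrite inE.
rewrite (bigmax_eq_arg set0 P0).
case: (@arg_maxnP _ set0 P (fun F => #|F|) P0) => F0 /andP[F0D] + maxF0.
rewrite config0P => /forall_inP F0p.
have F0p' : forall e1 e2, e1 \in F0 -> e2 \in F0 -> e1 != e2 -> e1 :&: e2 = set0.
  move=> e1 e2 h1 h2 ne; move/forall_inP: (F0p e1 h1) => /(_ e2 h2).
  by rewrite ne => /eqP.
set U := \bigcup_(f in F0) f.
have cover : D \subset \bigcup_(u in U) [set e in D | u \in e].
  apply/subsetP => e eD.
  suff [u uU ue] : exists2 u, u \in U & u \in e.
    by apply/bigcupP; exists u => //; rewrite inE eD ue.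
  case: (boolP (e \in F0)) => eF.
    have : e != set0 by apply/negP => /eqP h0; move: (h3 e eD); rewrite h0 cards0.
    case/set0Pn => u ue; exists u => //.
    by apply/bigcupP; exists e.
  case: (pickP [pred u | (u \in U) && (u \in e)]) => [u /andP[h1 h2]|none].
    by exists u.
  exfalso.
  have Pe : P (e |: F0).
    apply/andP; split; first by rewrite subUset sub1set eD F0D.
    have key : forall f, f \in F0 -> e :&: f = set0.
      move=> f fF; apply/setP => x; rewrite !inE.
      apply/negbTE/negP => /andP[xe xf].
      move: (none x) => /=; rewrite xe andbT => /negbT/negP; apply.
      by apply/bigcupP; exists f.
    rewrite config0P.
    apply/forall_inP => e1 h1; apply/forall_inP => e2 h2; apply/implyP.
    move: h1 h2; rewrite !in_setU1 => /predU1P[->|h1] /predU1P[->|h2] ne.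
    + by rewrite eqxx in ne.
    + by rewrite key.
    + by rewrite setIC key.
    + by rewrite F0p'.
  by move: (maxF0 _ Pe); rewrite cardsU1 eF add1n /= ltnn.
apply: leq_trans (subset_leq_card cover) _.
apply: leq_trans (card_bigcup_le _ _ (fun u => u \in U) (fun u => [set e in D | u \in e])) _.
apply: (@leq_trans (\sum_(u in U) M)); first by apply: leq_sum => u _; apply: hM.
rewrite sum_nat_const (mulnC 3 M) -mulnA mulnC; apply: leq_mul => //.
apply: leq_trans (card_bigcup_le _ _ (fun f => f \in F0) (fun f => f)) _.
rewrite mulnC -sum_nat_const; apply: leq_sum => f fF.
by rewrite h3 // (subsetP F0D).
Qed.

Lemma bigmax_ltR (I : finType) (P : pred I) (F : I -> nat) (B : R) :
  Rlt R0 B -> (forall i, P i -> Rlt (INR (F i)) B) ->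
  Rlt (INR (\max_(i | P i) F i)) B.
Proof.
move=> hB hF.
elim/big_ind: _ => [|x y hx hy|i Pi]; first by rewrite /=; lra.
  by rewrite /maxn; case: ifP.
exact: hF.
Qed.

Lemma fin_ineq (a b c d f : R) : Rlt 0 b -> Rle 1 d -> Rle f (INR 3 * c * d) ->
  Rlt (c * d) (INR 2 * a * b * d) -> Rlt f (INR 6 * a * b * d).
Proof. rewrite /=; nra. Qed.

Theorem lemma4 (p : R) (N t : nat) (X : 'M[bool]_(N, t)) (S : {set 'I_t}) :
  Rlt R0 p /\ Rlt p R1 ->
  good3 p X ->
  #|S| = 3 ->
  let y := rOR X S in
  let E := Hedges X y in
  let L2 := Rmult (INR 3) (L1 t) in
  let adj := fun v1 v2 : 'I_t =>
    (v1 != v2) &&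
    (if Rle_dec L2 (INR #|[set e in E | (v1 \in e) && (v2 \in e)]|) then true else false) in
  let E1 := [set e in E | [exists v1 in e, exists v2 in e, adj v1 v2]] in
  let E2 := E :\: E1 in
  (forall v : 'I_t, Rle (INR #|[set e in E2 | v \in e]|) (Rmult (Rmult (INR 2) (L1 t)) L2)) /\
  (E2 != set0 ->
   Rlt (INR #|E2|) (Rmult (Rmult (Rmult (INR 6) (L1 t)) L2)
      (INR (\max_(F : {set {set 'I_t}} | (F \subset E2) && is_config 0 F) #|F|)))).
Proof.
move=> _ [g1 [g2 [g3 g4]]] hS y E L2 adj E1 E2.
have SE : S \in E by rewrite /E /Hedges inE hS eqxx /y eqxx.
have [s0 s0S] : exists s0, s0 \in S.
  by apply/set0Pn; apply/negP => /eqP h; move: hS; rewrite h cards0.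
have hL1 : Rlt 1 (L1 t).
  have := g1 y [set S]; rewrite sub1set SE cards1 /=; apply => //.
  apply/existsP; exists [set s0]; rewrite cards1 eqxx /=.
  apply/forall_inP => e1; rewrite inE => /eqP ->.
  by apply/forall_inP => e2; rewrite inE => /eqP ->; rewrite eqxx.
have hL2 : Rlt 0 L2 by rewrite /L2 /=; lra.
have E2P : forall e, e \in E2 ->
    [/\ e \in E, #|e| = 3 & forall v w, v \in e -> w \in e -> ~~ adj v w].
  move=> e; rewrite inE => /andP[nE1 eE]; split => //.
    by move: eE; rewrite /E /Hedges inE => /andP[/eqP].
  move=> v w ve we; apply/negP => a; move: nE1; rewrite inE eE /=; apply/negP/negPn.
  apply/existsP; exists v; rewrite ve /=; apply/existsP; exists w; by rewrite we a.
have cnt : forall v w, w != v ->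
    Rlt (INR #|[set e in E2 | (v \in e) && (w \in e)]|) L2.
  move=> v w wv.
  case: (set_0Vmem [set e in E2 | (v \in e) && (w \in e)]) => [-> | [e]].
    by rewrite cards0 /=.
  rewrite inE => /andP[eE2 /andP[ve we]].
  have := (E2P e eE2) => -[_ _ /(_ v w ve we)].
  rewrite /adj eq_sym wv /=; case: Rle_dec => // hn _.
  apply: Rle_lt_trans (Rnot_le_lt _ _ hn).
  apply/le_INR/leP/subset_leq_card; apply/subsetP => x; rewrite inE => /andP[xE2 vw].
  by rewrite inE vw andbT; case: (E2P x xE2).
have deg : forall v, Rlt (INR #|[set e in E2 | v \in e]|) (Rmult (Rmult (INR 2) (L1 t)) L2).
  move=> v.
  set m := \max_(w | w != v) #|[set e in E2 | (v \in e) && (w \in e)]|.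
  have hm : Rlt (INR m) L2 := bigmax_ltR _ _ _ _ hL2 (fun w hw => cnt v w hw).
  have [F [FD Fv Fp hc]] := deg_bound _ E2 v m (fun e he => let: And3 _ h _ := E2P e he in h)
     (fun w hw => leq_bigmax_cond w hw).
  have hF : Rlt (INR #|F|) (L1 t).
    apply: (g1 y F).
      by apply: subset_trans FD _; apply/subsetP => e /E2P[].
    apply/existsP; exists [set v]; rewrite cards1 eqxx /=.
    apply/forall_inP => e1 h1; apply/forall_inP => e2 h2; apply/implyP => ne.
    by rewrite (Fp e1 e2 h1 h2 ne).
  have := le_INR _ _ (leP hc); rewrite !mult_INR /= => h.
  have := pos_INR #|F|; have := pos_INR m => h1 h2.
  have k1 := Rmult_le_compat_l _ _ _ h2 (Rlt_le _ _ hm).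
  have k2 := Rmult_lt_compat_r _ _ _ hL2 hF. apply: Rle_lt_trans h _. rewrite (Rmult_assoc _ (INR #|F|)) (Rmult_assoc _ (L1 t)); apply: Rmult_lt_compat_l; [lra | exact: Rle_lt_trans k1 k2].
split; first by move=> v; apply: Rlt_le; exact: deg v.
move=> ne.
set M := \max_(u : 'I_t) #|[set e in E2 | u \in e]|.
have hM : Rlt (INR M) (Rmult (Rmult (INR 2) (L1 t)) L2).
  apply: bigmax_ltR => [|u _]; last exact: deg.
  rewrite /=; nra.
have hb := E2_bound _ E2 M (fun e he => let: And3 _ h _ := E2P e he in h) (fun u => leq_bigmax u).
move: hb.
set mx := \max_(F : {set {set 'I_t}} | (F \subset E2) && is_config 0 F) #|F|.
move=> hb.
have hmx : 1 <= mx.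
  case/set0Pn: ne => e eE2; apply: (bigmax_sup [set e]); last by rewrite cards1.
  rewrite sub1set eE2 config0P /=.
  apply/forall_inP => e1; rewrite inE => /eqP ->.
  by apply/forall_inP => e2; rewrite inE => /eqP ->; rewrite eqxx.
have h := le_INR _ _ (leP hb); rewrite !mult_INR in h.
have h1 : Rle 1 (INR mx) by exact: (le_INR _ _ (leP hmx)).
have k := Rmult_lt_compat_r (INR mx) _ _ (Rlt_le_trans _ _ _ Rlt_0_1 h1) hM.
apply: (fin_ineq (L1 t) L2 (INR M) (INR mx) (INR #|E2|)).
exact hL2.
exact h1.
exact h.
exact k.
Qed.
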